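(* Consider the following four conditions, each required for all $0\le i,j\le d$: (C1) $E^*_iAE^*_j=0$ if $i-j>1$, and $E^*_iAE^*_j\ne0$ if $i-j=1$; (C2) $E^*_iAE^*_j=0$ if $j-i>1$, and $E^*_iAE^*_j\ne0$ if $j-i=1$; (C3) $E_iA^*E_j=0$ if $i-j>1$, and $E_iA^*E_j\ne0$ if $i-j=1$; (C4) $E_iA^*E_j=0$ if $j-i>1$, and $E_iA^*E_j\ne0$ if $j-i=1$. If at least three of (C1)–(C4) hold, then all four hold; that is, $(A;A^*;\{E_i\}_{i=0}^d;\{E^*_i\}_{i=0}^d)$ is a Leonard system.
   Context: Let $\mathbb K$ be a field, $d\ge 0$ an integer, and $\mathcal A$ a $\mathbb K$-algebra isomorphic to $\mathrm{Mat}_{d+1}(\mathbb K)$, with identity $I$. An element of $\mathcal A$ is multiplicity-free if it has $d+1$ mutually distinct eigenvalues, all in $\mathbb K$; for such $A$ with eigenvalues $\theta_0,\ldots,\theta_d$, the primitive idempotent associated with $\theta_i$ is $E_i=\prod_{j\ne i}(A-\theta_jI)/(\theta_i-\theta_j)$. Standing setup: $A,A^*$ are multiplicity-free elements of $\mathcal A$ ($A^*$ is just a name, not an adjoint); $E_0,\ldots,E_d$ is an ordering of the primitive idempotents of $A$; $E^*_0,\ldots,E^*_d$ is an ordering of the primitive idempotents of $A^*$. The sequence $(A;A^*;\{E_i\};\{E^*_i\})$ is a Leonard system if for all $0\le i,j\le d$: $E^*_iAE^*_j=0$ if $|i-j|>1$, $E^*_iAE^*_j\ne0$ if $|i-j|=1$,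 $E_iA^*E_j=0$ if $|i-j|>1$, and $E_iA^*E_j\ne0$ if $|i-j|=1$. *)

(* Defs.v *)
From mathcomp Require Import all_boot all_order all_algebra.
Set Implicit Arguments. Unset Strict Implicit. Unset Printing Implicit Defensive.
Import GRing.Theory.
Local Open Scope ring_scope.

(* The algebra A ~ Mat_{d+1}(K) is taken to be 'M[K]_(d.+1) itself. *)

(* Since A has at most
   d+1 eigenvalues, th then enumerates all of them. *)
Definition mult_free_eigs (K : fieldType) (d : nat)
    (A : 'M[K]_(d.+1)) (th : 'I_(d.+1) -> K) : Prop :=
  injective th /\ forall i, eigenvalue A (th i).

Definition prim_idem (K : fieldType) (d : nat)
    (A : 'M[K]_(d.+1)) (th : 'I_(d.+1) -> K) (i : 'I_(d.+1)) : 'M[K]_(d.+1) :=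
  \prod_(j < d.+1 | j != i) ((th i - th j)^-1 *: (A - (th j)%:M)).

Definition lower_cond (K : fieldType) (d : nat)
    (X : 'I_(d.+1) -> 'M[K]_(d.+1)) (M : 'M[K]_(d.+1)) : Prop :=
  forall i j : 'I_(d.+1),
    ((j.+1 < i)%N -> X i * M * X j = 0) /\
    ((i == j.+1 :> nat) -> X i * M * X j != 0).

Definition upper_cond (K : fieldType) (d : nat)
    (X : 'I_(d.+1) -> 'M[K]_(d.+1)) (M : 'M[K]_(d.+1)) : Prop :=
  forall i j : 'I_(d.+1),
    ((i.+1 < j)%N -> X i * M * X j = 0) /\
    ((j == i.+1 :> nat) -> X i * M * X j != 0).

(* Main.v *)
Require Import Defs.
From mathcomp Require Import all_boot all_order all_algebra.
From mathcomp Require Import ring zify.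
Set Implicit Arguments. Unset Strict Implicit. Unset Printing Implicit Defensive.
Import GRing.Theory.
Local Open Scope ring_scope.

Section S.
Variables (K : fieldType) (n : nat).
Local Notation M := 'M[K]_(n.+1).

Lemma prim_idem_conj (P X Y : M) th i : P *m X = Y *m P ->
  P *m prim_idem X th i = prim_idem Y th i *m P.
Proof.
move=> hP; rewrite /prim_idem.
elim/big_rec2: _ => [|j A B _ IH]; first by rewrite mulmx1 mul1mx.
rewrite -!mulmxE mulmxA -scalemxAr mulmxBr hP scalar_mxC -mulmxBl -scalemxAl -mulmxA IH mulmxA scalemxAl; congr (_ *m _); exact: scalemxAl.
Qed.

Lemma prim_idem_diag th i : injective th ->
  prim_idem (diag_mx (\row_k th k) : M) th i = delta_mx i i.
Proof.
move=> inj; rewrite /prim_idem.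
have -> : \prod_(j < n.+1 | j != i) ((th i - th j)^-1 *: (diag_mx (\row_k th k) - (th j)%:M))
   = diag_mx (\row_k \prod_(j < n.+1 | j != i) ((th i - th j)^-1 * (th k - th j))) :> M.
  rewrite unlock /reducebig; elim: (index_enum _) => [|j r IH] /=.
    by apply/matrixP=> a b; rewrite !mxE.
  case: (j != i); last by rewrite IH; congr diag_mx; apply/rowP=> k; rewrite !mxE.
  rewrite IH -mulmxE mul_mx_diag; apply/matrixP=> a b; rewrite !mxE.
  by case: eqP => [->|_]; rewrite ?eqxx ?mulr1n ?mulr0n ?subrr ?mulr0 ?mul0r.
apply/matrixP=> a b; rewrite !mxE.
case: (a =P b) => [<-|nab]; last first.
  by rewrite mulr0n; case: (b =P i) => [e|_]; rewrite ?andbF //; case: (a =P i) => [e'|//]; case: nab; rewrite e e'.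
rewrite mulr1n andbb; case: (a =P i) => [->|nai].
  by rewrite big1 // => j nji; rewrite mulVf // subr_eq0; apply/eqP=> /inj e; move: nji; rewrite e eqxx.
rewrite (bigD1 a) /=; first by rewrite subrr mulr0 mul0r.
by apply/eqP.
Qed.

Lemma rV_delta (u : 'rV[K]_n.+1) k : u *m delta_mx k k = u 0 k *: delta_mx 0 k.
Proof.
rewrite -[delta_mx k k](mul_delta_mx (0:'I_1)) mulmxA -colE (mx11_scalar (col _ _)).
by rewrite mul_scalar_mx mxE.
Qed.

Lemma eig_basis (Xs : M) ths : mult_free_eigs Xs ths ->
  exists P : M, P \in unitmx /\ P *m Xs = diag_mx (\row_k ths k) *m P.
Proof.
case=> inj hev.
have: forall i, exists2 v : 'rV[K]_n.+1, v *m Xs = ths i *: v & v != 0.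
  by move=> i; apply/eigenvalueP.
case/fin_all_exists2 => v hv1 hv2.
pose P : M := \matrix_i v i.
have hP : P *m Xs = diag_mx (\row_k ths k) *m P.
  apply/row_matrixP => i; rewrite row_mul rowK hv1 mul_diag_mx; apply/rowP=> j.
  by rewrite !mxE -(rowK v i) mxE.
exists P; split => //.
rewrite -row_free_unit -kermx_eq0; apply/eqP/row_matrixP => r; rewrite row0.
set u := row r (kermx P).
have hu : u *m P = 0 by rewrite -row_mul mulmx_ker row0.
apply/rowP => k; rewrite mxE.
have: u *m delta_mx k k *m P = 0.
  by rewrite -mulmxA -(prim_idem_diag k inj) -(prim_idem_conj _ _ hP) mulmxA hu mul0mx.
rewrite rV_delta -scalemxAl -rowE rowK => /eqP; rewrite scalemx_eq0 (negPf (hv2 k)) orbF.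
by rewrite mxE !mxE => /eqP.
Qed.

Lemma delta_T (T : M) i j : delta_mx i i *m T *m delta_mx j j = T i j *: delta_mx i j.
Proof.
rewrite -[X in X *m T](mul_delta_mx (0:'I_1)) -[X in _ *m X](mul_delta_mx (0:'I_1)).
rewrite !mulmxA -(mulmxA _ _ T) -rowE -(mulmxA _ _ (delta_mx j 0)) -colE.
rewrite (mx11_scalar (col _ _)) !mxE -mulmxA mul_scalar_mx -scalemxAr.
by rewrite mul_delta_mx.
Qed.

Lemma Es_form (Xs P : M) ths k : injective ths -> P \in unitmx ->
  P *m Xs = diag_mx (\row_k ths k) *m P ->
  prim_idem Xs ths k = invmx P *m delta_mx k k *m P.
Proof.
move=> inj uP hP; rewrite -(prim_idem_diag k inj) -mulmxA -(prim_idem_conj _ _ hP).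
by rewrite mulKmx.
Qed.

Lemma Es_entry (X Xs P : M) ths i j : injective ths -> P \in unitmx ->
  P *m Xs = diag_mx (\row_k ths k) *m P ->
  (prim_idem Xs ths i *m X *m prim_idem Xs ths j == 0) =
  ((P *m X *m invmx P) i j == 0).
Proof.
move=> inj uP hP; rewrite !(Es_form _ inj uP hP).
set T := P *m X *m invmx P.
have -> : invmx P *m delta_mx i i *m P *m X *m (invmx P *m delta_mx j j *m P)
   = invmx P *m (delta_mx i i *m T *m delta_mx j j) *m P.
  by rewrite /T !mulmxA.
rewrite delta_T; apply/eqP/eqP => [h|->]; last by rewrite scale0r mulmx0 mul0mx.
have : P *m (invmx P *m (T i j *: delta_mx i j) *m P) *m invmx P = 0.
  by rewrite h mulmx0 mul0mx.
rewrite !mulmxA mulmxV // mul1mx mulmxK // => /matrixP /(_ i j).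
by rewrite !mxE !eqxx mulr1.
Qed.

Lemma tri_sym (T : M) :
  (forall i j : 'I_n.+1, (j.+1 < i)%N -> T i j = 0) ->
  (forall i j : 'I_n.+1, (i.+1 < j)%N -> T i j = 0) ->
  (forall i j : 'I_n.+1, (j.+1 == i)%N -> T i j != 0) ->
  (forall i j : 'I_n.+1, (i.+1 == j)%N -> T i j != 0) ->
  exists s : 'rV[K]_n.+1, (forall k, s 0 k != 0) /\
     diag_mx s *m T = T^T *m diag_mx s.
Proof.
move=> h1 h2 h3 h4.
pose f (l : nat) := T (inord l) (inord l.+1) / T (inord l.+1) (inord l).
have fn0 : forall l, (l < n)%N -> f l != 0.
  move=> l ln; rewrite /f mulf_neq0 ?invr_eq0 //.
    by apply: h4; rewrite !inordK // ltnS ltnW.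
  by apply: h3; rewrite !inordK // ltnS ltnW.
have key : forall a b : 'I_n.+1, b = a.+1 :> nat ->
    \prod_(l < b) f l = \prod_(l < a) f l * (T a b / T b a).
  move=> a b eab; rewrite eab big_ord_recr /= /f.
  have -> : inord a = a by apply: val_inj; rewrite /= inordK.
  by have -> : inord a.+1 = b by apply: val_inj; rewrite /= inordK -eab.
exists (\row_k \prod_(l < k) f l); split.
  move=> k; rewrite mxE; apply/prodf_neq0 => l _; apply: fn0.
  exact: leq_trans (ltn_ord l) (ltn_ord k).
rewrite mul_diag_mx mul_mx_diag; apply/matrixP => a b; rewrite !mxE.
case: (ltngtP a b) => [ab|ab|ab].
- case: (ltngtP a.+1 b) => [ab'|ab'|ab']; [| by exfalso; lia |].
  + by rewrite (h2 a b) // (h1 b a) // mulr0 mul0r.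
  + rewrite (key a b) //; have hz : T b a != 0 by apply: h3; rewrite ab'.
    by field.
- case: (ltngtP b.+1 a) => [ab'|ab'|ab']; [| by exfalso; lia |].
  + by rewrite (h1 a b) // (h2 b a) // mulr0 mul0r.
  + rewrite (key b a) //; have hz : T a b != 0 by apply: h3; rewrite ab'.
    by field.
- have e : a = b by apply: val_inj.
  by rewrite e mulrC.
Qed.

Lemma idem_sym (S X : M) th i : S *m X = X^T *m S ->
  S *m prim_idem X th i = (prim_idem X th i)^T *m S /\
  prim_idem X th i *m X = X *m prim_idem X th i.
Proof.
move=> hS; rewrite /prim_idem; elim/big_rec: _ => [|j B _ [IH1 IH2]].
  by rewrite -[1 : M]/(1%:M) trmx1 mulmx1 mul1mx mulmx1 mul1mx.
set c := (th i - th j)^-1; set a := th j.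
have hF1 : S *m (c *: (X - a%:M)) = (c *: (X - a%:M))^T *m S.
  have -> : (c *: (X - a%:M))^T = c *: (X^T - a%:M).
    by apply/matrixP=> p q; rewrite !mxE eq_sym.
  by rewrite -scalemxAr -scalemxAl mulmxBr mulmxBl hS scalar_mxC.
have hF2 : (c *: (X - a%:M)) *m B = B *m (c *: (X - a%:M)).
  by rewrite -scalemxAr -scalemxAl mulmxBr mulmxBl IH2 scalar_mxC.
have hF3 : (c *: (X - a%:M)) *m X = X *m (c *: (X - a%:M)).
  by rewrite -scalemxAr -scalemxAl mulmxBr mulmxBl scalar_mxC.
rewrite -mulmxE; split.
  by rewrite mulmxA hF1 -mulmxA IH1 mulmxA hF2 trmx_mul.
by rewrite -mulmxA IH2 mulmxA hF3 mulmxA.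
Qed.

Lemma sym_cond (S X Y : M) th i j : S \in unitmx -> S *m X = X^T *m S ->
  S *m Y = Y^T *m S ->
  (prim_idem X th i *m Y *m prim_idem X th j == 0) =
  (prim_idem X th j *m Y *m prim_idem X th i == 0).
Proof.
move=> uS hX hY.
have H : forall i j, S *m (prim_idem X th i *m Y *m prim_idem X th j) =
   (prim_idem X th j *m Y *m prim_idem X th i)^T *m S.
  move=> i' j'; have [a1 _] := idem_sym th i' hX; have [a2 _] := idem_sym th j' hX.
  by rewrite !mulmxA a1 -(mulmxA _ S Y) hY mulmxA -(mulmxA _ S) a2 !trmx_mul !mulmxA.
have D : forall i j, prim_idem X th j *m Y *m prim_idem X th i = 0 ->
    prim_idem X th i *m Y *m prim_idem X th j = 0.
  move=> i' j' h; rewrite -(mulKmx uS (_ *m _)) H h trmx0 mul0mx mulmx0 //.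
by apply/eqP/eqP => /D.
Qed.

Lemma congr_sym (P Z W Sg : M) : P *m Z = W *m P -> Sg *m W = W^T *m Sg ->
  P^T *m Sg *m P *m Z = Z^T *m (P^T *m Sg *m P).
Proof.
move=> hP hS.
rewrite -mulmxA hP mulmxA -(mulmxA _ Sg) hS !mulmxA -trmx_mul -hP trmx_mul.
by [].
Qed.

Lemma exists_S (X Xs : M) ths : mult_free_eigs Xs ths ->
  lower_cond (prim_idem Xs ths) X -> upper_cond (prim_idem Xs ths) X ->
  exists S : M, [/\ S \in unitmx, S *m X = X^T *m S & S *m Xs = Xs^T *m S].
Proof.
move=> hm hl hu; have [P [uP hP]] := eig_basis hm; have inj := hm.1.
pose T := P *m X *m invmx P.
have E : forall i j, (prim_idem Xs ths i *m X *m prim_idem Xs ths j == 0) = (T i j == 0).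
  by move=> i j; apply: Es_entry.
have [s [sn0 hs]] : exists s : 'rV[K]_n.+1, (forall k, s 0 k != 0) /\
     diag_mx s *m T = T^T *m diag_mx s.
  apply: tri_sym.
  - by move=> i j h; apply/eqP; rewrite -E; apply/eqP; exact: (hl i j).1 h.
  - by move=> i j h; apply/eqP; rewrite -E; apply/eqP; exact: (hu i j).1 h.
  - by move=> i j h; rewrite -E; apply: (hl i j).2; rewrite eq_sym.
  - by move=> i j h; rewrite -E; apply: (hu i j).2; rewrite eq_sym.
exists (P^T *m diag_mx s *m P); split.
- rewrite !unitmx_mul unitmx_tr uP andbT unitmxE det_diag unitfE.
  by apply/prodf_neq0 => k _.
- apply: congr_sym hs; by rewrite /T mulmxKV.
- apply: congr_sym hP _; by rewrite tr_diag_mx diag_mxC.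
Qed.

Lemma low_up (S X Y : M) th : S \in unitmx -> S *m X = X^T *m S ->
  S *m Y = Y^T *m S ->
  lower_cond (prim_idem X th) Y <-> upper_cond (prim_idem X th) Y.
Proof.
move=> uS hX hY.
have H := fun i j => sym_cond th i j uS hX hY.
split=> h i j; split.
- by move=> lt; apply/eqP; change (prim_idem X th i *m Y *m prim_idem X th j == 0);
    rewrite H; apply/eqP; exact: (h j i).1.
- by move=> e; change (prim_idem X th i *m Y *m prim_idem X th j != 0);
    rewrite H; exact: (h j i).2.
- by move=> lt; apply/eqP; change (prim_idem X th i *m Y *m prim_idem X th j == 0);
    rewrite H; apply/eqP; exact: (h j i).1.
- by move=> e; change (prim_idem X th i *m Y *m prim_idem X th j != 0);
    rewrite H; exact: (h j i).2.
Qed.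
End S.

Theorem lemma5p7 (K : fieldType) (d : nat) (A As : 'M[K]_(d.+1))
    (th ths : 'I_(d.+1) -> K)
    (hA : mult_free_eigs A th) (hAs : mult_free_eigs As ths) :
  let E := prim_idem A th in
  let Es := prim_idem As ths in
  let C1 := lower_cond Es A in
  let C2 := upper_cond Es A in
  let C3 := lower_cond E As in
  let C4 := upper_cond E As in
  [\/ C1 /\ C2 /\ C3, C1 /\ C2 /\ C4, C1 /\ C3 /\ C4 | C2 /\ C3 /\ C4] ->
  C1 /\ C2 /\ C3 /\ C4.
Proof.
move=> E Es C1 C2 C3 C4 H.
have L12 : C1 -> C2 -> (C3 <-> C4).
  move=> h1 h2; have [S [uS hSA hSAs]] := exists_S hAs h1 h2.
  exact: (low_up th uS hSA hSAs).
have L34 : C3 -> C4 -> (C1 <-> C2).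
  move=> h3 h4; have [S [uS hSAs hSA]] := exists_S hA h3 h4.
  exact: (low_up ths uS hSAs hSA).
case: H => [[h1 [h2 h3]]|[h1 [h2 h4]]|[h1 [h3 h4]]|[h2 [h3 h4]]].
- by have := (L12 h1 h2).1 h3; tauto.
- by have := (L12 h1 h2).2 h4; tauto.
- by have := (L34 h3 h4).1 h1; tauto.
- by have := (L34 h3 h4).2 h2; tauto.
Qed.
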